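(* Let $K$ be a field with $\operatorname{char} K\neq 2$, $R=K[x_1,\dots,x_6]$ and $I=(x_1x_3,\ x_1x_4,\ x_1x_6,\ x_2x_4,\ x_2x_5,\ x_2x_6,\ x_3x_5,\ x_3x_6,\ x_4x_5x_6)$. Then $$I=\sqrt{(x_1x_4+x_3x_5,\ x_1x_3+x_2x_6+x_4x_5x_6,\ x_1x_6+x_2x_5,\ x_2x_4+x_3x_6)}.$$ *)

(* Defs.v *)
From HB Require Import structures.
From mathcomp Require Import all_boot all_order all_algebra.
From mathcomp Require Import mpoly.
Set Implicit Arguments. Unset Strict Implicit. Unset Printing Implicit Defensive.
Import GRing.Theory.
Local Open Scope ring_scope.

Definition in_ideal (R : comRingType) (gs : seq R) (p : R) : Prop :=
  exists c : 'I_(size gs) -> R, p = \sum_(i < size gs) c i * gs`_i.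

Definition in_radical (R : comRingType) (gs : seq R) (p : R) : Prop :=
  exists n : nat, in_ideal gs (p ^+ n).

Definition xv (K : fieldType) (i : nat) : {mpoly K[6]} := 'X_(inord i.-1).

Definition I_gens (K : fieldType) : seq {mpoly K[6]} :=
  [:: xv K 1 * xv K 3; xv K 1 * xv K 4; xv K 1 * xv K 6;
      xv K 2 * xv K 4; xv K 2 * xv K 5; xv K 2 * xv K 6;
      xv K 3 * xv K 5; xv K 3 * xv K 6; xv K 4 * xv K 5 * xv K 6].

Definition J_gens (K : fieldType) : seq {mpoly K[6]} :=
  [:: xv K 1 * xv K 4 + xv K 3 * xv K 5;
      xv K 1 * xv K 3 + xv K 2 * xv K 6 + xv K 4 * xv K 5 * xv K 6;
      xv K 1 * xv K 6 + xv K 2 * xv K 5;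
      xv K 2 * xv K 4 + xv K 3 * xv K 6].

(* Main.v *)
Require Import Defs.
From HB Require Import structures.
From mathcomp Require Import all_boot all_order all_algebra.
From mathcomp Require Import mpoly.

From mathcomp Require Import ring.
Import GRing.Theory.
Local Open Scope ring_scope.

Section IdealTheory.
Variable R : comRingType.
Implicit Types (gs : seq R) (p q a : R).

Lemma in_ideal0 gs : in_ideal gs 0.
Proof. exists (fun _ => 0); by rewrite big1 // => i _; rewrite mul0r. Qed.

Lemma in_idealD gs p q : in_ideal gs p -> in_ideal gs q -> in_ideal gs (p + q).
Proof.
move=> [c ->] [d ->]; exists (fun i => c i + d i); rewrite -big_split.
by apply: eq_bigr => i _; rewrite mulrDl.
Qed.

Lemma in_idealM gs a p : in_ideal gs p -> in_ideal gs (a * p).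
Proof.
move=> [c ->]; exists (fun i => a * c i); rewrite mulr_sumr.
by apply: eq_bigr => i _; rewrite mulrA.
Qed.

Lemma in_ideal_gen gs (i : 'I_(size gs)) : in_ideal gs gs`_i.
Proof.
exists (fun j => (j == i)%:R); rewrite (bigD1 i) //= eqxx mul1r big1 ?addr0 //.
by move=> j /negbTE ->; rewrite mul0r.
Qed.

Lemma in_ideal_ind gs (P : R -> Prop) :
  P 0 -> (forall x y, P x -> P y -> P (x + y)) ->
  (forall a x, P x -> P (a * x)) ->
  (forall i : 'I_(size gs), P gs`_i) ->
  forall p, in_ideal gs p -> P p.
Proof.
move=> P0 PD PM Pg p [c ->]; apply: (big_ind P) => // i _; exact: PM.
Qed.

Lemma in_radical0 gs : in_radical gs 0.
Proof. by exists 1%N; rewrite expr1; exact: in_ideal0. Qed.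

Lemma in_radicalM gs a p : in_radical gs p -> in_radical gs (a * p).
Proof. by move=> [n hn]; exists n; rewrite exprMn; exact: in_idealM. Qed.

Lemma in_idealMn gs p k : in_ideal gs p -> in_ideal gs (p *+ k).
Proof. by move=> h; rewrite -mulr_natl; exact: in_idealM. Qed.

Lemma in_radicalD gs p q : in_radical gs p -> in_radical gs q -> in_radical gs (p + q).
Proof.
move=> [m hm] [n hn]; exists (m + n)%N; rewrite exprDn.
apply: (big_ind (in_ideal gs)); [exact: in_ideal0 | exact: in_idealD |].
move=> [i hi] _ /=; apply: in_idealMn.
have [lt_in | le_ni] := ltnP i n.
  have -> : (m + n - i = (m + n - i - m) + m)%N by rewrite subnK // -addnBA ?leq_addr // ltnW.
  by rewrite exprD mulrAC; apply: in_idealM.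
by rewrite -(subnK le_ni) exprD mulrA; apply: in_idealM.
Qed.

Lemma ideal_in_radical gs J p :
  (forall i : 'I_(size gs), in_radical J gs`_i) -> in_ideal gs p -> in_radical J p.
Proof.
move=> H; apply: in_ideal_ind => //; [exact: in_radical0 | exact: in_radicalD |
  exact: in_radicalM].
Qed.

End IdealTheory.
Definition u (k : nat) : 'X_{1..6} := U_(inord k)%MM.
Definition gms : seq 'X_{1..6} :=
  [:: (u 0 + u 2)%MM; (u 0 + u 3)%MM; (u 0 + u 5)%MM; (u 1 + u 3)%MM;
      (u 1 + u 4)%MM; (u 1 + u 5)%MM; (u 2 + u 4)%MM; (u 2 + u 5)%MM;
      (u 3 + u 4 + u 5)%MM].

Lemma I_gensE (K : fieldType) : I_gens K = [seq 'X_[m] | m <- gms].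
Proof. by rewrite /I_gens /xv /gms /u /= !mpolyXD. Qed.

Lemma uE k (i : 'I_6) : (k < 6)%N -> u k i = (k == i)%N.
Proof. by move=> hk; rewrite /u mnm1E -val_eqE /= inordK. Qed.

Lemma sqfree g (i : 'I_6) : g \in gms -> (g i <= 1)%N.
Proof.
rewrite !inE => H.
repeat (case/orP: H => [/eqP -> | H]; first by
  rewrite ?mnmDE !uE //; case: i => [[|[|[|[|[|[|//]]]]]] hi]).
by move/eqP: H => ->; rewrite ?mnmDE !uE //; case: i => [[|[|[|[|[|[|//]]]]]] hi].
Qed.

Definition good (m : 'X_{1..6}) := has (fun g => (g <= m)%MM) gms.

Lemma good0 : good 0%MM = false.
Proof.
have H a x : (a < 6)%N -> ((u a + x)%MM <= 0)%MM = false.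
  move=> ha; apply/negP => h; have := lepm_trans (lem_addr _ _) h.
  by rewrite /u lep1mP mnm0E eqxx.
have H2 a x y : (a < 6)%N -> ((u a + x + y)%MM <= 0)%MM = false.
  by move=> ha; rewrite -addmA H.
by rewrite /good /gms /= !H2 // !H.
Qed.

Lemma good_mul m n : good (m *+ n)%MM -> good m.
Proof.
case: n => [|n]; first by rewrite mulm0n good0.
case/hasP => g gin hle; apply/hasP; exists g => //.
apply/mnm_lepP => i; move/mnm_lepP: hle => /(_ i); rewrite mulmnE.
have := @sqfree g i gin.
case: (m i) => [|k]; first by rewrite mul0n; case: (g i).
by case: (g i) => [|[|]].
Qed.
Section Main.
Variable K : fieldType.
Local Notation MP := {mpoly K[6]}.

Lemma A1 (p : MP) m : in_ideal (I_gens K) p -> ~~ good m -> p@_m = 0.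
Proof.
move=> [c ->] hb; rewrite raddf_sum /=; apply: big1 => i _.
have hi : (i < size gms)%N := ltn_ord i.
rewrite I_gensE (nth_map 0%MM) //.
set g := nth 0%MM gms i.
apply/eqP; rewrite mcoeff_eq0; apply/negP => hin.
move: hin; rewrite (perm_mem (msuppMX (c i) g)) => /mapP [m' _ em].
move/hasPn: hb => /(_ g (mem_nth _ hi)); rewrite em lem_addr.
by [].
Qed.

Lemma gen_in g : g \in gms -> in_ideal (I_gens K) 'X_[g].
Proof.
move=> hg.
have hi : (index g gms < size (I_gens K))%N by rewrite I_gensE size_map index_mem.
have := @in_ideal_gen _ _ (Ordinal hi); rewrite /= I_gensE (nth_map 0%MM) ?index_mem //.
by rewrite nth_index.
Qed.

Lemma A2 m : good m -> in_ideal (I_gens K) ('X_[m] : MP).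
Proof.
case/hasP => g gin hle; rewrite -(submK hle) mpolyXD.
by apply: in_idealM; exact: gen_in.
Qed.

Lemma I_radical (p : MP) n : in_ideal (I_gens K) (p ^+ n) -> in_ideal (I_gens K) p.
Proof.
move=> hpn.
set r : MP := \sum_(m <- msupp p | ~~ good m) p@_m *: 'X_[m].
set q : MP := \sum_(m <- msupp p | good m) p@_m *: 'X_[m].
have hp : p = q + r by rewrite {1}[p]mpolyE (bigID good) /=.
have hq : in_ideal (I_gens K) q.
  apply: (big_ind (in_ideal (I_gens K))); [exact: in_ideal0 | exact: in_idealD |].
  by move=> m hm; rewrite -mul_mpolyC; apply: in_idealM; exact: A2.
have hr m : good m -> r@_m = 0.
  move=> hm; rewrite raddf_sum /=; apply: big1 => m' hm'.
  rewrite mcoeffZ mcoeffX; case: eqP => [e|_]; last by rewrite mulr0.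
  by move: hm'; rewrite e hm.
suff r0 : r = 0 by rewrite hp r0 addr0.
apply/eqP; apply/negPn/negP => nz.
have hrn : in_ideal (I_gens K) (r ^+ n).
  have -> : r ^+ n = p ^+ n + (- \sum_(i < n) p ^+ (n.-1 - i) * r ^+ i) * q.
    have := subrXX p r n; rewrite {2}hp addrK => e.
    by rewrite mulNr mulrC -e opprB addrC subrK.
  by apply: in_idealD => //; apply: in_idealM.
have [g_ml | b_ml] := boolP (good (mlead r *+ n)%MM).
  move: (hr _ (@good_mul _ _ g_ml)) => /eqP; rewrite mleadc_eq0.
  by rewrite (negbTE nz).
have := @A1 _ _ hrn b_ml; rewrite mleadcX => /eqP; rewrite expf_eq0 mleadc_eq0.
by rewrite (negbTE nz) andbF.
Qed.

Lemma J_in_I (p : MP) : in_ideal (J_gens K) p -> in_ideal (I_gens K) p.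
Proof.
have G k : (k < 9)%N -> in_ideal (I_gens K) (I_gens K)`_k.
  by move=> hk; exact: (@in_ideal_gen _ _ (Ordinal (hk : (k < size (I_gens K))%N))).
apply: in_ideal_ind; [exact: in_ideal0 | exact: in_idealD | exact: in_idealM |].
case=> [[|[|[|[|//]]]] hi] /=.
- by apply: in_idealD; [exact: (G 1%N isT) | exact: (G 6%N isT)].
- by apply: in_idealD; [apply: in_idealD; [exact: (G 0%N isT) | exact: (G 5%N isT)] | exact: (G 8%N isT)].
- by apply: in_idealD; [exact: (G 2%N isT) | exact: (G 4%N isT)].
- by apply: in_idealD; [exact: (G 3%N isT) | exact: (G 7%N isT)].
Qed.

End Main.


Lemma cert13 (R : comRingType) (x1 x2 x3 x4 x5 x6 h : R) : h * 2 = 1 ->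
  (x1*x3)^+2 = (h * (-x3*x5*x6 + x2^+2)) * (x1 * x4 + x3 * x5)
   + (h * (2%:R*x1*x3)) * (x1 * x3 + x2 * x6 + x4 * x5 * x6)
   + (h * (-x3*x4*x5 + -x2*x3)) * (x1 * x6 + x2 * x5)
   + (h * (x3*x5^+2 + -x1*x2)) * (x2 * x4 + x3 * x6).
Proof. move=> hh; transitivity (h * 2 * (x1*x3)^+2); first by rewrite hh mul1r. ring. Qed.

Lemma cert14 (R : comRingType) (x1 x2 x3 x4 x5 x6 h : R) : h * 2 = 1 ->
  (x1*x4)^+3 = (h * (-x4^+2*x5^+2*x6 + x3*x5*x6^+2 + -2%:R*x1*x3*x4*x5 + 2%:R*x1^+2*x4^+2)) * (x1 * x4 + x3 * x5)
   + (h * (2%:R*x3*x4*x5^+2)) * (x1 * x3 + x2 * x6 + x4 * x5 * x6)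
   + (h * (x4^+3*x5^+2 + -x3*x4*x5*x6)) * (x1 * x6 + x2 * x5)
   + (h * (-x4^+2*x5^+3 + -x3*x5^+2*x6)) * (x2 * x4 + x3 * x6).
Proof. move=> hh; transitivity (h * 2 * (x1*x4)^+3); first by rewrite hh mul1r. ring. Qed.

Lemma cert16 (R : comRingType) (x1 x2 x3 x4 x5 x6 h : R) : h * 2 = 1 ->
  (x1*x6)^+3 = (h * (x1*x5^+2*x6^+2 + -x1^+2*x2*x5)) * (x1 * x4 + x3 * x5)
   + (h * (x1*x2*x5^+2 + -x1^+2*x5*x6)) * (x1 * x3 + x2 * x6 + x4 * x5 * x6)
   + (h * (-x3*x5^+3*x6 + -x2*x4*x5^+3 + -x1*x2*x5*x6 + 2%:R*x1^+2*x6^+2)) * (x1 * x6 + x2 * x5)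
   + (h * (x2*x5^+4 + x1^+3*x5)) * (x2 * x4 + x3 * x6).
Proof. move=> hh; transitivity (h * 2 * (x1*x6)^+3); first by rewrite hh mul1r. ring. Qed.

Lemma cert24 (R : comRingType) (x1 x2 x3 x4 x5 x6 h : R) : h * 2 = 1 ->
  (x2*x4)^+3 = (h * (-x3*x4^+2*x6^+2 + x3^+3*x6 + 2%:R*x2*x3^+2*x4)) * (x1 * x4 + x3 * x5)
   + (h * (-2%:R*x2*x3*x4^+2)) * (x1 * x3 + x2 * x6 + x4 * x5 * x6)
   + (h * (x3*x4^+3*x6 + -x3^+3*x4)) * (x1 * x6 + x2 * x5)
   + (h * (x3*x4^+2*x5*x6 + -x3^+3*x5 + 2%:R*x2^+2*x4^+2)) * (x2 * x4 + x3 * x6).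
Proof. move=> hh; transitivity (h * 2 * (x2*x4)^+3); first by rewrite hh mul1r. ring. Qed.

Lemma cert25 (R : comRingType) (x1 x2 x3 x4 x5 x6 h : R) : h * 2 = 1 ->
  (x2*x5)^+3 = (h * (-x1*x5^+2*x6^+2 + x1^+2*x2*x5)) * (x1 * x4 + x3 * x5)
   + (h * (-x1*x2*x5^+2 + x1^+2*x5*x6)) * (x1 * x3 + x2 * x6 + x4 * x5 * x6)
   + (h * (x3*x5^+3*x6 + x2*x4*x5^+3 + 2%:R*x2^+2*x5^+2 + -x1*x2*x5*x6)) * (x1 * x6 + x2 * x5)
   + (h * (-x2*x5^+4 + -x1^+3*x5)) * (x2 * x4 + x3 * x6).
Proof. move=> hh; transitivity (h * 2 * (x2*x5)^+3); first by rewrite hh mul1r. ring. Qed.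

Lemma cert26 (R : comRingType) (x1 x2 x3 x4 x5 x6 h : R) : h * 2 = 1 ->
  (x2*x6)^+2 = (h * (x6^+3 + x2^+2)) * (x1 * x4 + x3 * x5)
   + (h * (2%:R*x2*x6)) * (x1 * x3 + x2 * x6 + x4 * x5 * x6)
   + (h * (-x4*x6^+2 + -x2*x3)) * (x1 * x6 + x2 * x5)
   + (h * (-x5*x6^+2 + -x1*x2)) * (x2 * x4 + x3 * x6).
Proof. move=> hh; transitivity (h * 2 * (x2*x6)^+2); first by rewrite hh mul1r. ring. Qed.

Lemma cert35 (R : comRingType) (x1 x2 x3 x4 x5 x6 h : R) : h * 2 = 1 ->
  (x3*x5)^+3 = (h * (x4^+2*x5^+2*x6 + -x3*x5*x6^+2 + 2%:R*x3^+2*x5^+2)) * (x1 * x4 + x3 * x5)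
   + (h * (-2%:R*x3*x4*x5^+2)) * (x1 * x3 + x2 * x6 + x4 * x5 * x6)
   + (h * (-x4^+3*x5^+2 + x3*x4*x5*x6)) * (x1 * x6 + x2 * x5)
   + (h * (x4^+2*x5^+3 + x3*x5^+2*x6)) * (x2 * x4 + x3 * x6).
Proof. move=> hh; transitivity (h * 2 * (x3*x5)^+3); first by rewrite hh mul1r. ring. Qed.

Lemma cert36 (R : comRingType) (x1 x2 x3 x4 x5 x6 h : R) : h * 2 = 1 ->
  (x3*x6)^+3 = (h * (x3*x4^+2*x6^+2 + x3^+3*x6)) * (x1 * x4 + x3 * x5)
   + (h * (-2%:R*x3^+2*x4*x6)) * (x1 * x3 + x2 * x6 + x4 * x5 * x6)
   + (h * (-x3*x4^+3*x6 + x3^+3*x4)) * (x1 * x6 + x2 * x5)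
   + (h * (x3*x4^+2*x5*x6 + 2%:R*x3^+2*x6^+2 + -x3^+3*x5)) * (x2 * x4 + x3 * x6).
Proof. move=> hh; transitivity (h * 2 * (x3*x6)^+3); first by rewrite hh mul1r. ring. Qed.

Lemma cert456 (R : comRingType) (x1 x2 x3 x4 x5 x6 h : R) : h * 2 = 1 ->
  (x4*x5*x6)^+2 = (h * (x6^+3 + -x3*x5*x6)) * (x1 * x4 + x3 * x5)
   + (h * (2%:R*x4*x5*x6)) * (x1 * x3 + x2 * x6 + x4 * x5 * x6)
   + (h * (-x4*x6^+2 + -x3*x4*x5)) * (x1 * x6 + x2 * x5)
   + (h * (-x5*x6^+2 + x3*x5^+2)) * (x2 * x4 + x3 * x6).
Proof. move=> hh; transitivity (h * 2 * (x4*x5*x6)^+2); first by rewrite hh mul1r. ring. Qed.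

Lemma inJ4 (K : fieldType) (c0 c1 c2 c3 : {mpoly K[6]}) :
  in_ideal (J_gens K) (c0 * (xv K 1 * xv K 4 + xv K 3 * xv K 5)
   + c1 * (xv K 1 * xv K 3 + xv K 2 * xv K 6 + xv K 4 * xv K 5 * xv K 6)
   + c2 * (xv K 1 * xv K 6 + xv K 2 * xv K 5)
   + c3 * (xv K 2 * xv K 4 + xv K 3 * xv K 6)).
Proof.
exists (fun i => nth 0 [:: c0; c1; c2; c3] i).
by rewrite /= !big_ord_recl big_ord0 addr0 /= !addrA.
Qed.

Theorem mainTheorem8 (K : fieldType) (hK : 2%N \notin [pchar K]) :
  forall p : {mpoly K[6]}, in_ideal (I_gens K) p <-> in_radical (J_gens K) p.
Proof.
have h2 : (2%:R : K) != 0.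
  by apply: contra hK => e; rewrite inE /= e.
set h : {mpoly K[6]} := ((2%:R : K)^-1)%:MP.
have hh : h * 2 = 1 by rewrite /h -mpolyC_nat -mpolyCM mulVf // mpolyC1.
move=> p; split.
  move=> hp; apply: (@ideal_in_radical _ (I_gens K) (J_gens K) p _ hp).
  case=> [[|[|[|[|[|[|[|[|[|//]]]]]]]]] hi] /=.
  - by exists 2%N; rewrite (@cert13 _ (xv K 1) (xv K 2) (xv K 3) (xv K 4) (xv K 5) (xv K 6) _ hh); exact: inJ4.
  - by exists 3%N; rewrite (@cert14 _ (xv K 1) (xv K 2) (xv K 3) (xv K 4) (xv K 5) (xv K 6) _ hh); exact: inJ4.
  - by exists 3%N; rewrite (@cert16 _ (xv K 1) (xv K 2) (xv K 3) (xv K 4) (xv K 5) (xv K 6) _ hh); exact: inJ4.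
  - by exists 3%N; rewrite (@cert24 _ (xv K 1) (xv K 2) (xv K 3) (xv K 4) (xv K 5) (xv K 6) _ hh); exact: inJ4.
  - by exists 3%N; rewrite (@cert25 _ (xv K 1) (xv K 2) (xv K 3) (xv K 4) (xv K 5) (xv K 6) _ hh); exact: inJ4.
  - by exists 2%N; rewrite (@cert26 _ (xv K 1) (xv K 2) (xv K 3) (xv K 4) (xv K 5) (xv K 6) _ hh); exact: inJ4.
  - by exists 3%N; rewrite (@cert35 _ (xv K 1) (xv K 2) (xv K 3) (xv K 4) (xv K 5) (xv K 6) _ hh); exact: inJ4.
  - by exists 3%N; rewrite (@cert36 _ (xv K 1) (xv K 2) (xv K 3) (xv K 4) (xv K 5) (xv K 6) _ hh); exact: inJ4.
  - by exists 2%N; rewrite (@cert456 _ (xv K 1) (xv K 2) (xv K 3) (xv K 4) (xv K 5) (xv K 6) _ hh); exact: inJ4.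
case=> n hn; apply: (@I_radical K p n); exact: J_in_I.
Qed.
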